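(* For two swm-graphs $G$ and $H$, the thickening of the Cartesian product equals the strong product of the thickenings: $(G\times H)^{\varDelta}=G^{\varDelta}\otimes H^{\varDelta}$.
   Context: Graphs are connected, simple, undirected, possibly infinite; $d$ is the shortest-path metric. Weakly modular graph: (TC) for vertices $x,y,z$ with $d(x,y)=1$ and $d(x,z)=d(y,z)$ there is a common neighbor $u$ of $x,y$ with $d(u,z)=d(x,z)-1$; (QC) for $x,y,w,z$ with $d(x,y)=2$, $d(w,x)=d(w,y)=1$, $d(w,z)-1=d(x,z)=d(y,z)$ there is a common neighbor $u$ of $x,y$ with $d(u,z)=d(x,z)-1$. An swm-graph is a weakly modular graph with no induced $K_4^-$ and no isometric $K_{3,3}^-$ subgraph ($K_4$, $K_{3,3}$ minus one edge). A nonempty vertex set $X$ is gated if for every vertex $x$ there is $y\in X$ with $d(x,z)=d(x,y)+d(y,z)$ for all $z\in X$; it is Boolean-gated if it is gated and induces a connected thick subgraph (any two vertices at distance 2 have two common neighbors at distance 2 from each other). The thickening $G^{\varDelta}$ is obtained from $G$ by joining every pair of distinct vertices lying in a common Boolean-gated set. The Cartesian product $G\times H$ has vertex set $V(G)\times V(H)$ with $(x,y)\sim(x',y')$ iff ($x=x'$ and $yy'\in E(H)$) or ($y=y'$ and $xx'\in E(G)$). The strong product $G\otimes H$ has vertex set $V(G)\times V(H)$ with distinct $(x,y),(x',y')$ adjacent iff $x,x'$ are equal or adjacent and $y,y'$ are equal or adjacent. *)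

(* Defs.v *)
From Stdlib Require Import Arith ClassicalEpsilon.

Section Graphs.
Context {V : Type}.
Implicit Types (adj : V -> V -> Prop).

Inductive walk adj : V -> V -> nat -> Prop :=
| walk_nil : forall x, walk adj x x 0
| walk_cons : forall x z y n, adj x z -> walk adj z y n -> walk adj x y (S n).

(* shortest-path distance (meaningful when x and y are connected) *)
Definition dist adj (x y : V) : nat :=
  epsilon (inhabits 0)
    (fun n => walk adj x y n /\ forall m, walk adj x y m -> n <= m).

Definition simple_graph adj : Prop :=
  (forall x y, adj x y -> adj y x) /\ (forall x, ~ adj x x).

Definition connected adj : Prop := forall x y, exists n, walk adj x y n.

Definition triangle_condition adj : Prop :=
  forall x y z, adj x y -> dist adj x z = dist adj y z ->
    exists u, adj u x /\ adj u y /\ dist adj u z + 1 = dist adj x z.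

Definition quadrangle_condition adj : Prop :=
  forall x y w z, dist adj x y = 2 -> adj w x -> adj w y ->
    dist adj w z = dist adj x z + 1 -> dist adj x z = dist adj y z ->
    exists u, adj u x /\ adj u y /\ dist adj u z + 1 = dist adj x z.

Definition weakly_modular adj : Prop :=
  simple_graph adj /\ connected adj /\
  triangle_condition adj /\ quadrangle_condition adj.

Definition has_induced_K4minus adj : Prop :=
  exists a b c d, a <> b /\ a <> c /\ a <> d /\ b <> c /\ b <> d /\ c <> d /\
    adj a b /\ adj a c /\ adj b c /\ adj b d /\ adj c d /\ ~ adj a d.

(* isometric K33^- : vertices a1 a2 a3 | b1 b2 b3 (edge a1b1 removed) whose
   G-distances equal the distances in K_{3,3} minus an edge *)
Definition has_isometric_K33minus adj : Prop :=
  exists a1 a2 a3 b1 b2 b3,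
    dist adj a1 a2 = 2 /\ dist adj a1 a3 = 2 /\ dist adj a2 a3 = 2 /\
    dist adj b1 b2 = 2 /\ dist adj b1 b3 = 2 /\ dist adj b2 b3 = 2 /\
    dist adj a1 b1 = 3 /\ dist adj a1 b2 = 1 /\ dist adj a1 b3 = 1 /\
    dist adj a2 b1 = 1 /\ dist adj a2 b2 = 1 /\ dist adj a2 b3 = 1 /\
    dist adj a3 b1 = 1 /\ dist adj a3 b2 = 1 /\ dist adj a3 b3 = 1.

Definition swm adj : Prop :=
  weakly_modular adj /\ ~ has_induced_K4minus adj /\ ~ has_isometric_K33minus adj.

Definition gated adj (X : V -> Prop) : Prop :=
  (exists v, X v) /\
  forall x, exists y, X y /\ forall z, X z -> dist adj x z = dist adj x y + dist adj y z.

Definition induced adj (X : V -> Prop) : V -> V -> Prop :=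
  fun u v => X u /\ X v /\ adj u v.

Definition thick_on adj (X : V -> Prop) : Prop :=
  let a := induced adj X in
  forall u v, X u -> X v -> dist a u v = 2 ->
    exists w w', X w /\ X w' /\ a u w /\ a w v /\ a u w' /\ a w' v /\
      dist a w w' = 2.

Definition connected_on adj (X : V -> Prop) : Prop :=
  forall u v, X u -> X v -> exists n, walk (induced adj X) u v n.

Definition boolean_gated adj (X : V -> Prop) : Prop :=
  gated adj X /\ connected_on adj X /\ thick_on adj X.

Definition thickening adj : V -> V -> Prop :=
  fun u v => u <> v /\ exists X, boolean_gated adj X /\ X u /\ X v.

End Graphs.

Definition cartesian {V W : Type} (aG : V -> V -> Prop) (aH : W -> W -> Prop)
  : V * W -> V * W -> Prop :=
  fun p q => (fst p = fst q /\ aH (snd p) (snd q)) \/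
             (snd p = snd q /\ aG (fst p) (fst q)).

Definition strong {V W : Type} (aG : V -> V -> Prop) (aH : W -> W -> Prop)
  : V * W -> V * W -> Prop :=
  fun p q => p <> q /\ (fst p = fst q \/ aG (fst p) (fst q)) /\
             (snd p = snd q \/ aH (snd p) (snd q)).

(* Main.v *)
Require Import Defs.
From Stdlib Require Import Arith Lia Classical ClassicalEpsilon FunctionalExtensionality PropExtensionality.

Lemma dist_iff {V U : Type} (A : V->V->Prop) (B : U->U->Prop) x y x' y' :
  (forall n, walk A x y n <-> walk B x' y' n) -> dist A x y = dist B x' y'.
Proof.
  intro H. unfold dist.
  assert (E : (fun n => walk A x y n /\ forall m, walk A x y m -> n <= m) =
              (fun n => walk B x' y' n /\ forall m, walk B x' y' m -> n <= m)).
  { apply functional_extensionality; intro n. apply propositional_extensionality.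
    split; intros [H1 H2]; split.
    - apply H; auto.
    - intros m Hm; apply H2, H, Hm.
    - apply H; auto.
    - intros m Hm; apply H2, H, Hm. }
  rewrite E. reflexivity.
Qed.

Lemma min_exists (P : nat -> Prop) n : P n -> exists k, P k /\ forall m, P m -> k <= m.
Proof.
  induction n as [n IH] using lt_wf_ind. intro Hn.
  destruct (classic (exists m, m < n /\ P m)) as [[m [Hm1 Hm2]]|Hno].
  - exact (IH m Hm1 Hm2).
  - exists n. split; auto. intros m Hm. destruct (le_lt_dec n m); auto.
    exfalso; apply Hno; eauto.
Qed.

Lemma dist_spec {V} (A : V->V->Prop) x y n : walk A x y n ->
  walk A x y (dist A x y) /\ forall m, walk A x y m -> dist A x y <= m.
Proof.
  intro H. unfold dist. apply epsilon_spec. apply (min_exists _ n H).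
Qed.

Lemma dist_le {V} (A : V->V->Prop) x y n : walk A x y n -> dist A x y <= n.
Proof. intro H. apply (dist_spec A x y n H); auto. Qed.

Lemma dist_walk {V} (A : V->V->Prop) x y n : walk A x y n -> walk A x y (dist A x y).
Proof. intro H. apply (dist_spec A x y n H). Qed.

Lemma dist_unique {V} (A : V->V->Prop) x y n : walk A x y n ->
  (forall m, walk A x y m -> n <= m) -> dist A x y = n.
Proof.
  intros H1 H2. pose proof (dist_le A x y n H1). pose proof (H2 _ (dist_walk A x y n H1)). lia.
Qed.

Lemma dist_self {V} (A : V->V->Prop) x : dist A x x = 0.
Proof. pose proof (dist_le A x x 0 (walk_nil A x)). lia. Qed.

Lemma walk0 {V} (A : V->V->Prop) x y : walk A x y 0 -> x = y.
Proof. intro H. inversion H; auto. Qed.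

Lemma dist0_eq {V} (A : V->V->Prop) x y n : walk A x y n -> dist A x y = 0 -> x = y.
Proof. intros H E. pose proof (dist_walk A x y n H) as H'. rewrite E in H'. apply walk0 in H'. auto. Qed.

Lemma dist1 {V} (A : V->V->Prop) x y n : walk A x y n -> dist A x y = 1 -> A x y.
Proof.
  intros H E. pose proof (dist_walk A x y n H) as H'. rewrite E in H'.
  inversion H'; subst. apply walk0 in H4. subst; auto.
Qed.

Lemma adj_dist1 {V} (A : V->V->Prop) x y : A x y -> x <> y -> dist A x y = 1.
Proof.
  intros H N. assert (W1 : walk A x y 1) by (eapply walk_cons; [exact H| apply walk_nil]).
  pose proof (dist_le A x y 1 W1).
  destruct (dist A x y) eqn:E; [|lia]. exfalso; apply N. eapply dist0_eq; eauto.
Qed.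

Lemma walk_app {V} (A : V->V->Prop) x y z n m : walk A x y n -> walk A y z m -> walk A x z (n+m).
Proof.
  induction 1; intros; simpl; auto. eapply walk_cons; eauto.
Qed.

Lemma dist_tri {V} (A : V->V->Prop) x y z n m : walk A x y n -> walk A y z m ->
  dist A x z <= dist A x y + dist A y z.
Proof.
  intros H1 H2. apply dist_le. apply walk_app with y; eapply dist_walk; eauto.
Qed.

Lemma walk_map {V U} (A : V->V->Prop) (B : U->U->Prop) (f : V -> U) :
  (forall x y, A x y -> B (f x) (f y)) -> forall x y n, walk A x y n -> walk B (f x) (f y) n.
Proof.
  intros Hf x y n H. induction H. apply walk_nil. eapply walk_cons; eauto.
Qed.

Lemma walk_restrict {V} (P : V -> Prop) (A B : V->V->Prop) :
  (forall x y, P x -> A x y -> B x y /\ P y) ->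
  forall x y n, P x -> walk A x y n -> walk B x y n.
Proof.
  intros Hf x y n Px H. induction H. apply walk_nil.
  destruct (Hf _ _ Px H). eapply walk_cons; eauto.
Qed.

Lemma dist_restrict {V} (P : V -> Prop) (A B : V->V->Prop) :
  (forall x y, P x -> A x y -> B x y /\ P y) ->
  (forall x y, P x -> B x y -> A x y /\ P y) ->
  forall x y, P x -> dist A x y = dist B x y.
Proof.
  intros H1 H2 x y Px. apply dist_iff. intro n; split; apply walk_restrict with P; auto.
Qed.

Lemma walk_cart_l {V W} (A : V->V->Prop) (B : W->W->Prop) (b : W) a c n :
  walk A a c n -> walk (cartesian A B) (a,b) (c,b) n.
Proof.
  induction 1. apply walk_nil. eapply walk_cons; [|exact IHwalk]. right; simpl; auto.
Qed.

Lemma walk_cart_r {V W} (A : V->V->Prop) (B : W->W->Prop) (a : V) b d n :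
  walk B b d n -> walk (cartesian A B) (a,b) (a,d) n.
Proof.
  induction 1. apply walk_nil. eapply walk_cons; [|exact IHwalk]. left; simpl; auto.
Qed.

Lemma walk_cart_join {V W} (A : V->V->Prop) (B : W->W->Prop) a b c d n1 n2 :
  walk A a c n1 -> walk B b d n2 -> walk (cartesian A B) (a,b) (c,d) (n1+n2).
Proof.
  intros H1 H2. apply walk_app with (c,b). apply walk_cart_l; auto. apply walk_cart_r; auto.
Qed.

Lemma walk_cart_split {V W} (A : V->V->Prop) (B : W->W->Prop) u v n :
  walk (cartesian A B) u v n -> exists n1 n2, walk A (fst u) (fst v) n1 /\
     walk B (snd u) (snd v) n2 /\ n1 + n2 = n.
Proof.
  induction 1.
  - exists 0, 0. repeat split; try apply walk_nil.
  - destruct IHwalk as (n1 & n2 & H1 & H2 & E).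
    destruct H as [[E1 E2]|[E1 E2]].
    + exists n1, (S n2). rewrite E1. repeat split; auto. eapply walk_cons; eauto. lia.
    + exists (S n1), n2. rewrite E1. repeat split; auto. eapply walk_cons; eauto. lia.
Qed.

Lemma dist_cart {V W} (A : V->V->Prop) (B : W->W->Prop) a b c d n1 n2 :
  walk A a c n1 -> walk B b d n2 ->
  dist (cartesian A B) (a,b) (c,d) = dist A a c + dist B b d.
Proof.
  intros H1 H2. apply dist_unique.
  - apply walk_cart_join; eapply dist_walk; eauto.
  - intros m Hm. destruct (walk_cart_split _ _ _ _ _ Hm) as (m1 & m2 & K1 & K2 & E).
    simpl in *. pose proof (dist_le _ _ _ _ K1). pose proof (dist_le _ _ _ _ K2). lia.
Qed.

Definition swap {V W} (p : V*W) : W*V := (snd p, fst p).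
Lemma swap_swap {V W} (p : V*W) : swap (swap p) = p.
Proof. destruct p; reflexivity. Qed.

Lemma walk_swap {V W} (R : V*W -> V*W -> Prop) (R' : W*V -> W*V -> Prop) :
  (forall z z', R' z z' <-> R (swap z) (swap z')) ->
  forall z z' n, walk R' z z' n <-> walk R (swap z) (swap z') n.
Proof.
  intros HR z z' n. split; intro H.
  - apply walk_map with (B := R) (f := swap) in H; auto. intros x y; apply HR.
  - apply walk_map with (B := R') (f := swap) in H.
    + rewrite !swap_swap in H; auto.
    + intros x y Hxy. apply HR. rewrite !swap_swap; auto.
Qed.

Lemma dist_swap {V W} (R : V*W -> V*W -> Prop) (R' : W*V -> W*V -> Prop) :
  (forall z z', R' z z' <-> R (swap z) (swap z')) ->
  forall z z', dist R' z z' = dist R (swap z) (swap z').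
Proof. intros HR z z'. apply dist_iff. apply walk_swap; auto. Qed.

Lemma bg_single {V} (A : V->V->Prop) x : boolean_gated A (fun a => a = x).
Proof.
  repeat split.
  - exists x; auto.
  - intro y. exists x. split; auto. intros z ->. rewrite dist_self. lia.
  - intros u v -> ->. exists 0. apply walk_nil.
  - intros u v -> -> E. rewrite dist_self in E. discriminate.
Qed.

Lemma bg_swap {V W} (aG : V->V->Prop) (aH : W->W->Prop) X :
  boolean_gated (cartesian aG aH) X ->
  boolean_gated (cartesian aH aG) (fun z => X (swap z)).
Proof.
  assert (HC : forall z z', cartesian aH aG z z' <-> cartesian aG aH (swap z) (swap z')).
  { intros [] []; unfold cartesian; simpl; tauto. }
  assert (HI : forall z z', induced (cartesian aH aG) (fun z => X (swap z)) z z' <->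
                 induced (cartesian aG aH) X (swap z) (swap z')).
  { intros z z'; unfold induced. rewrite HC. tauto. }
  intros [[[v0 Hv0] Hg] [Hc Ht]]. repeat split.
  - exists (swap v0). rewrite swap_swap; auto.
  - intro x. destruct (Hg (swap x)) as [y [Hy Hyz]]. exists (swap y).
    rewrite swap_swap. split; auto. intros z Hz.
    rewrite !(dist_swap _ _ HC). rewrite swap_swap. auto.
  - intros u v Hu Hv. destruct (Hc _ _ Hu Hv) as [n Hn]. exists n.
    apply (walk_swap _ _ HI). auto.
  - intros u v Hu Hv E. rewrite (dist_swap _ _ HI) in E.
    destruct (Ht _ _ Hu Hv E) as (w & w' & Hw & Hw' & H1 & H2 & H3 & H4 & E').
    exists (swap w), (swap w'). rewrite !HI, !swap_swap.
    assert (D := dist_swap _ _ HI (swap w) (swap w')). rewrite !swap_swap in D.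
    unfold induced in *. repeat split; auto; try tauto. rewrite D. auto.
Qed.

Lemma thick_swap {V W} (aG : V->V->Prop) (aH : W->W->Prop) p q :
  thickening (cartesian aG aH) p q -> thickening (cartesian aH aG) (swap p) (swap q).
Proof.
  intros [N [X [HX [Hp Hq]]]]. split.
  - intro E. apply N. rewrite <- (swap_swap p), <- (swap_swap q), E. auto.
  - exists (fun z => X (swap z)). rewrite !swap_swap. split; auto. apply bg_swap; auto.
Qed.

Section Main.
Context {V W : Type} (aG : V->V->Prop) (aH : W->W->Prop).
Hypotheses (cG : connected aG) (cH : connected aH)
  (sG : forall x y, aG x y -> aG y x) (sH : forall x y, aH x y -> aH y x)
  (iG : forall x, ~ aG x x) (iH : forall x, ~ aH x x).

Notation C := (cartesian aG aH).

Lemma dist_c u v : dist C u v = dist aG (fst u) (fst v) + dist aH (snd u) (snd v).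
Proof.
  destruct u as [a b], v as [c d]. destruct (cG a c) as [n1 H1], (cH b d) as [n2 H2].
  apply (dist_cart _ _ _ _ _ _ _ _ H1 H2).
Qed.

Lemma triG x y z : dist aG x z <= dist aG x y + dist aG y z.
Proof. destruct (cG x y) as [n H1], (cG y z) as [m H2]. eapply dist_tri; eauto. Qed.
Lemma triH x y z : dist aH x z <= dist aH x y + dist aH y z.
Proof. destruct (cH x y) as [n H1], (cH y z) as [m H2]. eapply dist_tri; eauto. Qed.

Lemma closure X : gated C X -> forall a b c d, X (a,b) -> X (c,d) -> X (a,d).
Proof.
  intros [_ Hg] a b c d H1 H2. destruct (Hg (a,d)) as [[g1 g2] [Hg' Hz]].
  pose proof (Hz _ H1) as E1. pose proof (Hz _ H2) as E2.
  rewrite !dist_c in E1, E2; simpl in *.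
  rewrite dist_self in E1. rewrite dist_self in E2.
  pose proof (triH d g2 b). pose proof (triG a g1 c).
  assert (A1 : dist aG a g1 = 0) by lia. assert (A2 : dist aH d g2 = 0) by lia.
  destruct (cG a g1) as [n Hn], (cH d g2) as [m Hm].
  apply (dist0_eq _ _ _ _ Hn) in A1. apply (dist0_eq _ _ _ _ Hm) in A2. subst; auto.
Qed.

Section Proj.
Variable X : V*W -> Prop.
Hypothesis HX : boolean_gated C X.
Variable p : V*W.
Hypothesis Hp : X p.
Let X1 := fun a => exists b, X (a,b).
Let X2 := fun b => exists a, X (a,b).
Let y0 := snd p.

Lemma inX1 a : X1 a -> X (a, y0).
Proof.
  intros [b Hb]. destruct p as [p1 p2]. eapply closure; eauto. apply HX.
Qed.

Lemma X1_gated : gated aG X1.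
Proof.
  split.
  - exists (fst p), (snd p). destruct p; auto.
  - intro x. destruct HX as [[_ Hg] _]. destruct (Hg (x,y0)) as [[g1 g2] [Hgg Hz]].
    exists g1. split. exists g2; auto.
    intros z [b Hb]. assert (Hzg : X (z,g2)) by (eapply closure; eauto; apply HX).
    pose proof (Hz _ Hzg) as E. rewrite !dist_c in E; simpl in E.
    rewrite dist_self in E. lia.
Qed.

Lemma proj_walk u v n : walk (induced C X) u v n -> exists m, walk (induced aG X1) (fst u) (fst v) m.
Proof.
  induction 1. exists 0; apply walk_nil.
  destruct IHwalk as [m Hm]. destruct H as (Hx & Hz & [[E _]|[_ A]]).
  - rewrite E. eauto.
  - exists (S m). eapply walk_cons; [|exact Hm]. destruct x, z; simpl in *.
    repeat split; auto; eexists; eauto.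
Qed.

Lemma X1_conn : connected_on aG X1.
Proof.
  intros u v Hu Hv. destruct HX as [_ [Hc _]].
  destruct (Hc _ _ (inX1 _ Hu) (inX1 _ Hv)) as [n Hn].
  apply proj_walk in Hn. simpl in Hn. auto.
Qed.

Lemma dist_indX u v : X u ->
  dist (induced C X) u v = dist (cartesian (induced aG X1) (induced aH X2)) u v.
Proof.
  apply dist_restrict.
  - intros [x1 x2] [z1 z2] Hx (_ & Hz & [[E A]|[E A]]); simpl in *; split; auto.
    + left; simpl; repeat split; auto; eexists; eauto.
    + right; simpl; repeat split; auto; eexists; eauto.
  - intros [x1 x2] [z1 z2] Hx [[E (_ & [a Ha] & A)]|[E (_ & [b Hb] & A)]]; simpl in *; subst.
    + assert (X (z1, z2)) by (eapply closure; eauto; apply HX).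
      unfold induced; repeat split; auto. left; auto.
    + assert (X (z1, z2)) by (eapply closure; eauto; apply HX).
      unfold induced; repeat split; auto. right; auto.
Qed.

Lemma mid u1 v1 y w1 w2 : C (u1,y) (w1,w2) -> C (w1,w2) (v1,y) -> u1 <> v1 ->
  w2 = y /\ aG u1 w1 /\ aG w1 v1.
Proof.
  unfold cartesian; simpl. intros [[E1 A1]|[E1 A1]] [[E2 A2]|[E2 A2]] N; subst.
  - exfalso; auto.
  - exfalso; eapply iH; eauto.
  - exfalso; eapply iH; eauto.
  - auto.
Qed.

Lemma X1_thick : thick_on aG X1.
Proof.
  intros u1 v1 Hu Hv E.
  assert (N : u1 <> v1) by (intro; subst; rewrite dist_self in E; discriminate).
  destruct HX as [_ [_ Ht]].
  assert (E' : dist (induced C X) (u1,y0) (v1,y0) = 2).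
  { rewrite dist_indX by (apply inX1; auto).
    destruct (X1_conn _ _ Hu Hv) as [n Hn].
    rewrite (dist_cart _ _ _ _ _ _ _ _ Hn (walk_nil _ y0)). rewrite dist_self. lia. }
  destruct (Ht _ _ (inX1 _ Hu) (inX1 _ Hv) E') as
     ([w1 w2] & [w1' w2'] & Hw & Hw' & H1 & H2 & H3 & H4 & E2).
  destruct H1 as (_ & _ & H1), H2 as (_ & _ & H2), H3 as (_ & _ & H3), H4 as (_ & _ & H4).
  destruct (mid _ _ _ _ _ H1 H2 N) as (-> & A1 & A2).
  destruct (mid _ _ _ _ _ H3 H4 N) as (-> & A3 & A4).
  assert (Xw : X1 w1) by (eexists; eauto). assert (Xw' : X1 w1') by (eexists; eauto).
  exists w1, w1'. do 6 (split; [try assumption; try (split; [assumption|split; assumption])|]).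

  rewrite dist_indX in E2 by auto.
  destruct (X1_conn _ _ Xw Xw') as [n Hn].
  rewrite (dist_cart _ _ _ _ _ _ _ _ Hn (walk_nil _ y0)), dist_self in E2. lia.
Qed.

Lemma X1_bg : boolean_gated aG X1.
Proof. split; [apply X1_gated| split; [apply X1_conn | apply X1_thick]]. Qed.

End Proj.

Lemma thick1 p q : thickening C p q -> fst p <> fst q -> thickening aG (fst p) (fst q).
Proof.
  intros [_ [X [HX [Hp Hq]]]] N. split; auto.
  exists (fun a => exists b, X (a,b)). split. apply (X1_bg X HX p Hp).
  destruct p, q; simpl; split; eexists; eauto.
Qed.

Lemma bg_prod X1 X2 : boolean_gated aG X1 -> boolean_gated aH X2 ->
  boolean_gated C (fun z => X1 (fst z) /\ X2 (snd z)).
Proof.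
  intros [[[a Ha] Hg1] [Hc1 Ht1]] [[[b Hb] Hg2] [Hc2 Ht2]].
  set (X := fun z : V*W => X1 (fst z) /\ X2 (snd z)).
  assert (HR : forall u v, X u -> dist (induced C X) u v =
      dist (cartesian (induced aG X1) (induced aH X2)) u v).
  { apply dist_restrict.
    - intros [x1 x2] [z1 z2] Hx (_ & Hz & [[E A]|[E A]]); unfold X in *; simpl in *; subst;
        split; auto; unfold cartesian, induced; simpl; tauto.
    - intros [x1 x2] [z1 z2] Hx [[E A]|[E A]]; unfold X, induced, cartesian in *; simpl in *; subst;
        tauto. }
  assert (DP : forall u v, X u -> X v -> dist (induced C X) u v =
     dist (induced aG X1) (fst u) (fst v) + dist (induced aH X2) (snd u) (snd v)).
  { intros [u1 u2] [v1 v2] [Hu1 Hu2] [Hv1 Hv2]. rewrite HR by (split; auto).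
    destruct (Hc1 _ _ Hu1 Hv1) as [n1 W1], (Hc2 _ _ Hu2 Hv2) as [n2 W2].
    apply (dist_cart _ _ _ _ _ _ _ _ W1 W2). }
  repeat split.
  - exists (a,b); split; auto.
  - intros [x1 x2]. destruct (Hg1 x1) as [g1 [G1 K1]], (Hg2 x2) as [g2 [G2 K2]].
    exists (g1,g2). split. split; auto.
    intros [z1 z2] [Z1 Z2]; simpl in Z1, Z2. rewrite !dist_c; simpl. rewrite (K1 _ Z1), (K2 _ Z2). lia.
  - intros [u1 u2] [v1 v2] [Hu1 Hu2] [Hv1 Hv2].
    destruct (Hc1 _ _ Hu1 Hv1) as [n1 W1], (Hc2 _ _ Hu2 Hv2) as [n2 W2].
    exists (n1+n2). apply walk_restrict with (P := X) (A := cartesian (induced aG X1) (induced aH X2)).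
    + intros [x1 x2] [z1 z2] Hx [[E A]|[E A]]; unfold X, induced, cartesian in *; simpl in *; subst;
        tauto.
    + split; auto.
    + apply walk_cart_join; auto.
  - intros [u1 u2] [v1 v2] [Hu1 Hu2] [Hv1 Hv2] E.
    rewrite DP in E by (split; auto). simpl in E.
    destruct (Hc1 _ _ Hu1 Hv1) as [n1 W1], (Hc2 _ _ Hu2 Hv2) as [n2 W2]. simpl in W1, W2.
    assert (Cs : (dist (induced aG X1) u1 v1 = 0 /\ dist (induced aH X2) u2 v2 = 2) \/
                 (dist (induced aG X1) u1 v1 = 1 /\ dist (induced aH X2) u2 v2 = 1) \/
                 (dist (induced aG X1) u1 v1 = 2 /\ dist (induced aH X2) u2 v2 = 0)) by lia.
    destruct Cs as [[D1 D2]|[[D1 D2]|[D1 D2]]].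
    + apply (dist0_eq _ _ _ _ W1) in D1. subst v1.
      destruct (Ht2 _ _ Hu2 Hv2 D2) as (w & w' & Hw & Hw' & A1 & A2 & A3 & A4 & E').
      exists (u1,w), (u1,w'). unfold induced, cartesian in *; simpl.
      repeat split; auto; try tauto.
      rewrite DP by (split; auto). simpl. rewrite dist_self. lia.
    + pose proof (dist1 _ _ _ _ W1 D1) as A1. pose proof (dist1 _ _ _ _ W2 D2) as A2.
      exists (v1,u2), (u1,v2). unfold induced, cartesian in A1, A2 |- *; simpl.
      repeat split; auto; try tauto.
      rewrite DP by (split; auto). simpl.
      assert (N1 : v1 <> u1) by (intro; subst; rewrite dist_self in D1; discriminate).
      assert (N2 : u2 <> v2) by (intro; subst; rewrite dist_self in D2; discriminate).
      assert (B1 : induced aG X1 v1 u1) by (unfold induced in *; split; [tauto|split;[tauto|apply sG; tauto]]).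
      rewrite (adj_dist1 _ _ _ B1 N1), (adj_dist1 _ _ _ A2 N2). reflexivity.
    + apply (dist0_eq _ _ _ _ W2) in D2. subst v2.
      destruct (Ht1 _ _ Hu1 Hv1 D1) as (w & w' & Hw & Hw' & A1 & A2 & A3 & A4 & E').
      exists (w,u2), (w',u2). unfold induced, cartesian in *; simpl.
      repeat split; auto; try tauto.
      rewrite DP by (split; auto). simpl. rewrite dist_self. lia.
Qed.

End Main.

Theorem lemma2p18 (V W : Type) (aG : V -> V -> Prop) (aH : W -> W -> Prop) :
  swm aG -> swm aH ->
  forall p q : V * W,
    thickening (cartesian aG aH) p q <-> strong (thickening aG) (thickening aH) p q.
Proof.
  intros SG SH p q.
  destruct SG as [[[symG irrG] [cG _]] _]. destruct SH as [[[symH irrH] [cH _]] _].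
  split.
  - intro T. split; [apply T|]. split.
    + destruct (classic (fst p = fst q)) as [E|E]; [left; auto | right].
      eapply thick1; eauto.
    + destruct (classic (snd p = snd q)) as [E|E]; [left; auto | right].
      pose proof (thick_swap _ _ _ _ T) as T'.
      exact (thick1 aH aG cH cG irrG (swap p) (swap q) T' E).
  - intros [N [H1 H2]].
    assert (E1 : exists X1, boolean_gated aG X1 /\ X1 (fst p) /\ X1 (fst q)).
    { destruct H1 as [E|[_ [X1 HX1]]].
      - exists (fun a => a = fst q). split; [apply bg_single| auto].
      - exists X1; auto. }
    assert (E2 : exists X2, boolean_gated aH X2 /\ X2 (snd p) /\ X2 (snd q)).
    { destruct H2 as [E|[_ [X2 HX2]]].
      - exists (fun a => a = snd q). split; [apply bg_single| auto].
      - exists X2; auto. }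
    destruct E1 as [X1 [B1 [P1 Q1]]], E2 as [X2 [B2 [P2 Q2]]].
    split; auto. exists (fun z => X1 (fst z) /\ X2 (snd z)). split.
    + eapply bg_prod; eauto.
    + tauto.
Qed.
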